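(* Let $V_A, V_B \subseteq \mathbb{R}^d$ be $k$-dimensional subspaces, let $w\in\mathbb{R}^d$ with $\|w\|=1$, and set $K_A^* = \|\Pi_{V_A} w\|$, $K_B^* = \|\Pi_{V_B} w\|$, $K_{AB}^* = \|\Pi_{V_A+V_B} w\|$, and $\Delta = K_{AB}^* - \max(K_A^*,K_B^* )$. Assume $K_A^* \ge K_B^*$. Let $\eta = \eta(V_A,V_B,w)$ be the private information value of $V_B$ relative to $V_A$. Then $$\Delta = \sqrt{(K_A^* )^2 + \eta^2} - K_A^*,$$ and $$\frac{\eta^2}{2K_A^* + \eta} \le \Delta \le \eta.$$ Both bounds are tight: the upper bound holds with equality when $K_A^* = 0$, and the lower bound is asymptotically tight as $\eta \to 0$ (with $K_A^*>0$ fixed), in the sense that $\Delta$ and $\eta^2/(2K_A^*+\eta)$ both equal $\eta^2/(2K_A^* )$ up to $o(\eta^2)$.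
   Context: $\Pi_V$ denotes orthogonal projection onto a subspace $V$; $V_A+V_B=\{u+v: u\in V_A, v\in V_B\}$. Principal angles $\theta_1,\dots,\theta_k\in[0,\pi/2]$ between $V_A$ and $V_B$ are defined recursively by $\cos\theta_i = \max\{\langle u,v\rangle : u\in V_A,\|u\|=1,u\perp u_1,\dots,u_{i-1};\ v\in V_B,\|v\|=1,v\perp v_1,\dots,v_{i-1}\}$, with maximizers $(u_i,v_i)$ (principal vectors) satisfying $\langle u_i,v_j\rangle=\cos\theta_i\,\delta_{ij}$. For $\theta_i>0$ set $\tilde v_i=(v_i-\cos\theta_i\,u_i)/\sin\theta_i$. The private information value is $\eta(V_A,V_B,w)=\sqrt{\sum_{i:\theta_i>0}\langle w,\tilde v_i\rangle^2}$. (Interpretation: $K(y)=\langle w,h(y)\rangle$ is a linear scoring function on representations, $K_A^*, K_B^*$ are the single-model optimal scores, $K_{AB}^*$ the debate-optimal score, and $\Delta$ the debate advantage.) *)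

(* Defs.v *)
From HB Require Import structures.
From mathcomp Require Import all_boot all_order all_algebra.
From mathcomp Require Import all_classical all_reals all_analysis.
Set Implicit Arguments. Unset Strict Implicit. Unset Printing Implicit Defensive.
Import Order.TTheory GRing.Theory Num.Theory.
Local Open Scope ring_scope.
Local Open Scope classical_set_scope.

(* Vectors of R^d are row vectors 'rV[R]_d; a subspace of R^d is the row
   space of a square matrix V : 'M[R]_d; membership is (u <= V)%MS;
   the sum V_A + V_B is (VA + VB)%MS; dim V = \rank V. *)

Section Defs.
Variables (R : realType) (d : nat).

Definition dotv (u v : 'rV[R]_d) : R := (u *m v^T) 0 0.
Definition normv (u : 'rV[R]_d) : R := Num.sqrt (dotv u u).

Definition is_orth_proj (V : 'M[R]_d) (w p : 'rV[R]_d) : Prop :=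
  (p <= V)%MS /\ (forall x : 'rV[R]_d, (x <= V)%MS -> dotv (w - p) x = 0).

Definition orth_proj (V : 'M[R]_d) (w : 'rV[R]_d) : 'rV[R]_d :=
  xget 0 [set p | is_orth_proj V w p].

(* (u, v) : 'I_k -> R^d is a system of principal vectors between V_A and V_B
   following the recursive definition: for each i, (u i, v i) is a maximizer of
   <x, y> over unit x in V_A orthogonal to u_0..u_{i-1} and unit y in V_B
   orthogonal to v_0..v_{i-1}. *)
Definition feasible_pair (VA VB : 'M[R]_d) (k : nat) (u v : 'I_k -> 'rV[R]_d)
    (i : 'I_k) (x y : 'rV[R]_d) : Prop :=
  [/\ (x <= VA)%MS, normv x = 1 & (forall j : 'I_k, (j < i)%N -> dotv x (u j) = 0)] /\
  [/\ (y <= VB)%MS, normv y = 1 & (forall j : 'I_k, (j < i)%N -> dotv y (v j) = 0)].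

Definition principal_vectors (VA VB : 'M[R]_d) (k : nat)
    (u v : 'I_k -> 'rV[R]_d) : Prop :=
  forall i : 'I_k, feasible_pair VA VB u v i (u i) (v i) /\
    (forall x y, feasible_pair VA VB u v i x y -> dotv x y <= dotv (u i) (v i)).

Definition principal_angle (k : nat) (u v : 'I_k -> 'rV[R]_d) (i : 'I_k) : R :=
  acos (dotv (u i) (v i)).

Definition vtilde (k : nat) (u v : 'I_k -> 'rV[R]_d) (i : 'I_k) : 'rV[R]_d :=
  let th := principal_angle u v i in
  (sin th)^-1 *: (v i - cos th *: u i).

Definition private_info (k : nat) (u v : 'I_k -> 'rV[R]_d) (w : 'rV[R]_d) : R :=
  Num.sqrt (\sum_(i < k | 0 < principal_angle u v i) (dotv w (vtilde u v i)) ^+ 2).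

End Defs.

(* Main.v *)
Require Import Defs.
From HB Require Import structures.
From mathcomp Require Import all_boot all_order all_algebra.
From mathcomp Require Import all_classical all_reals all_analysis.
From mathcomp Require Import ring lra.
Import Order.TTheory GRing.Theory Num.Theory numFieldNormedType.Exports.
Local Open Scope ring_scope.
Local Open Scope classical_set_scope.
Set Implicit Arguments. Unset Strict Implicit. Unset Printing Implicit Defensive.

Section Dot.
Variables (R : realType) (d : nat).
Implicit Types (x y z : 'rV[R]_d).

Lemma dotvE x y : dotv x y = \sum_j x 0 j * y 0 j.
Proof. by rewrite /dotv !mxE; apply: eq_bigr => j _; rewrite mxE. Qed.

Lemma dotvC x y : dotv x y = dotv y x.
Proof. by rewrite !dotvE; apply: eq_bigr => j _; rewrite mulrC. Qed.

Lemma dotvDl z x y : dotv (x + y) z = dotv x z + dotv y z.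
Proof. by rewrite !dotvE -big_split; apply: eq_bigr => j _; rewrite mxE mulrDl. Qed.

Lemma dotvZl z a x : dotv (a *: x) z = a * dotv x z.
Proof. by rewrite !dotvE mulr_sumr; apply: eq_bigr => j _; rewrite mxE mulrA. Qed.

Lemma dotv0l z : dotv 0 z = 0.
Proof. by rewrite dotvE big1 // => j _; rewrite mxE mul0r. Qed.

Lemma dotvNl z x : dotv (- x) z = - dotv x z.
Proof. by rewrite -scaleN1r dotvZl mulN1r. Qed.

Lemma dotvBl z x y : dotv (x - y) z = dotv x z - dotv y z.
Proof. by rewrite dotvDl dotvNl. Qed.

Lemma dotvDr z x y : dotv z (x + y) = dotv z x + dotv z y.
Proof. by rewrite dotvC dotvDl !(dotvC z). Qed.
Lemma dotvZr z a x : dotv z (a *: x) = a * dotv z x.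
Proof. by rewrite dotvC dotvZl dotvC. Qed.
Lemma dotvNr z x : dotv z (- x) = - dotv z x.
Proof. by rewrite dotvC dotvNl dotvC. Qed.
Lemma dotvBr z x y : dotv z (x - y) = dotv z x - dotv z y.
Proof. by rewrite dotvDr dotvNr. Qed.
Lemma dotv0r z : dotv z 0 = 0.
Proof. by rewrite dotvC dotv0l. Qed.

Lemma dotv_suml (I : Type) (r : seq I) (P : pred I) (F : I -> 'rV[R]_d) z :
  dotv (\sum_(i <- r | P i) F i) z = \sum_(i <- r | P i) dotv (F i) z.
Proof. exact: (big_morph (fun x => dotv x z) (dotvDl z) (dotv0l z)). Qed.

Lemma dotv_sumr (I : Type) (r : seq I) (P : pred I) (F : I -> 'rV[R]_d) z :
  dotv z (\sum_(i <- r | P i) F i) = \sum_(i <- r | P i) dotv z (F i).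
Proof. by rewrite dotvC dotv_suml; apply: eq_bigr => i _; rewrite dotvC. Qed.

Lemma dotvv_ge0 x : 0 <= dotv x x.
Proof. by rewrite dotvE sumr_ge0 // => j _; rewrite -expr2 sqr_ge0. Qed.

Lemma dotvv_eq0 x : dotv x x = 0 -> x = 0.
Proof.
rewrite dotvE => H; apply/matrixP => i j; rewrite ord1 mxE.
have Hn : forall l, predT l -> 0 <= x 0 l * x 0 l by move=> l _; rewrite -expr2 sqr_ge0.
have /eqP := @psumr_eq0P _ _ predT (fun j => x 0 j * x 0 j) Hn H j isT.
by rewrite -expr2 sqrf_eq0 => /eqP.
Qed.

Lemma normv1P x : normv x = 1 <-> dotv x x = 1.
Proof.
rewrite /normv; split => [H|->]; last exact: sqrtr1.
by rewrite -(sqr_sqrtr (dotvv_ge0 x)) H expr1n.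
Qed.

Lemma dotv_mx m (E : 'M[R]_(m, d)) z x :
  z *m E^T = 0 -> (x <= E)%MS -> dotv z x = 0.
Proof.
move=> Hz /mulmxKpV <-; rewrite /dotv trmx_mul mulmxA Hz mul0mx.
by rewrite mxE.
Qed.

Lemma orth_mx m (E : 'M[R]_(m, d)) z :
  (forall i, dotv z (row i E) = 0) -> z *m E^T = 0.
Proof.
move=> H; apply/matrixP => i j; rewrite ord1 [RHS]mxE -(H j) dotvE !mxE.
by apply: eq_bigr => l _; rewrite !mxE.
Qed.

Lemma orth_proj_uniq (V : 'M[R]_d) (w p q : 'rV[R]_d) : is_orth_proj V w p -> is_orth_proj V w q -> p = q.
Proof.
move=> [Hp Op] [Hq Oq]; apply/eqP; rewrite -subr_eq0; apply/eqP/dotvv_eq0.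
have Hpq : (p - q <= V)%MS by rewrite addmx_sub // -scaleN1r scalemx_sub.
have E :  p - q = (w - q) - (w - p) by rewrite opprB [RHS]addrC [RHS]addrA subrK.
by rewrite {1}E dotvBl (Op _ Hpq) (Oq _ Hpq) subrr.
Qed.

Lemma orth_projE (V : 'M[R]_d) (w p : 'rV[R]_d) : is_orth_proj V w p -> orth_proj V w = p.
Proof.
move=> H; rewrite /orth_proj; apply: xget_unique => // q Hq.
exact: orth_proj_uniq Hq H.
Qed.

End Dot.
Lemma lim1 (R : realType) (a : R) : 0 < a ->
  ((fun e : R => (Num.sqrt (a ^+ 2 + e ^+ 2) - a - e ^+ 2 / (2 * a)) / e ^+ 2)
            @ (0 : R)^' --> (0 : R)).
Proof.
move=> a0; apply/cvgr0Pnorm_lt => eps eps0.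
have d0 : 0 < 4 * a ^+ 2 * eps by rewrite !mulr_gt0 // exprn_gt0.
near=> e.
have e0 : e != 0 by near: e; exact: nbhs_dnbhs_neq.
have ed : `|e| < 4 * a ^+ 2 * eps by near: e; exact: dnbhs0_lt.
set s := Num.sqrt _.
have s0 : 0 <= s by exact: sqrtr_ge0.
have ss : s ^+ 2 = a ^+ 2 + e ^+ 2 by rewrite sqr_sqrtr // addr_ge0 // sqr_ge0.
have e2 : 0 < e ^+ 2 by rewrite lt0r sqrf_eq0 e0 sqr_ge0.
have sa : a < s by nra.
have se : s <= a + `|e|.
  have : s ^+ 2 <= (a + `|e|) ^+ 2.
    rewrite ss sqrrD real_normK ?num_real // mulr2n; have := normr_ge0 e; nra.
  rewrite ler_pXn2r // ?nnegrE //; have := normr_ge0 e; nra.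
have -> : (s - a - e ^+ 2 / (2 * a)) / e ^+ 2 = (a - s) / (2 * a * (s + a)).
  have -> : e ^+ 2 = s ^+ 2 - a ^+ 2 by rewrite ss; ring.
  field; apply/andP; split; [|apply/andP; split]; try (apply/eqP; nra).
rewrite normrM normfV (ltr0_norm (x := a - s)) ?subr_lt0 //.
rewrite gtr0_norm; last by nra.
rewrite ltr_pdivrMr; last by nra.
nra.
Unshelve. all: by end_near.
Qed.

Lemma lim2 (R : realType) (a : R) : 0 < a ->
  ((fun e : R => (e ^+ 2 / (2 * a + e) - e ^+ 2 / (2 * a)) / e ^+ 2)
            @ (0 : R)^' --> (0 : R)).
Proof.
move=> a0; apply/cvgr0Pnorm_lt => eps eps0.
have d0 : 0 < 2 * a ^+ 2 * eps by rewrite !mulr_gt0 // exprn_gt0.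
near=> e.
have e0 : e != 0 by near: e; exact: nbhs_dnbhs_neq.
have ed : `|e| < 2 * a ^+ 2 * eps by near: e; exact: dnbhs0_lt.
have ea : `|e| < a by near: e; exact: dnbhs0_lt.
have ea' : - a < e < a by rewrite -ltr_norml.
have -> : (e ^+ 2 / (2 * a + e) - e ^+ 2 / (2 * a)) / e ^+ 2 = - e / (2 * a * (2 * a + e)).
  field; apply/andP; split; [|apply/andP; split]; try (apply/eqP; nra).
rewrite normrM normfV normrN (gtr0_norm (x := 2 * a * _)); last by nra.
rewrite ltr_pdivrMr; last by nra.
nra.
Unshelve. all: by end_near.
Qed.
Section Rot.
Variables (R : realType) (d : nat).
Implicit Types (z : 'rV[R]_d) (t : R).

Definition rot (t : R) (e1 e2 : 'rV[R]_d) :=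
  (1 + t ^+ 2)^-1 *: ((1 - t ^+ 2) *: e1 + (2 * t) *: e2).

Lemma t2pos (t : R) : 0 < 1 + t ^+ 2.
Proof. by rewrite ltr_pwDl // sqr_ge0. Qed.

Lemma rot_dotl t (e1 e2 : 'rV[R]_d) z :
  dotv (rot t e1 e2) z = (1 + t ^+ 2)^-1 * ((1 - t ^+ 2) * dotv e1 z + 2 * t * dotv e2 z).
Proof. by rewrite /rot dotvZl dotvDl !dotvZl. Qed.

Lemma rot_dotr t (e1 e2 : 'rV[R]_d) z :
  dotv z (rot t e1 e2) = (1 + t ^+ 2)^-1 * ((1 - t ^+ 2) * dotv z e1 + 2 * t * dotv z e2).
Proof. by rewrite dotvC rot_dotl !(dotvC z). Qed.

Lemma rot_norm t (e1 e2 : 'rV[R]_d) : dotv e1 e1 = 1 -> dotv e2 e2 = 1 -> dotv e1 e2 = 0 ->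
  normv (rot t e1 e2) = 1.
Proof.
move=> h1 h2 h12; apply/normv1P; rewrite rot_dotl !rot_dotr h1 h2 h12 dotvC h12.
have := t2pos t; move=> tp.
field; by rewrite gt_eqF.
Qed.

Lemma rot_sub t (e1 e2 : 'rV[R]_d) (V : 'M[R]_d) : (e1 <= V)%MS -> (e2 <= V)%MS -> (rot t e1 e2 <= V)%MS.
Proof. by move=> h1 h2; rewrite scalemx_sub // addmx_sub // scalemx_sub. Qed.

Lemma rot_alg (c a : R) : 0 <= c ->
  (forall t, (1 + t ^+ 2)^-1 * ((1 - t ^+ 2) * c + 2 * t * a) <= c) -> a = 0.
Proof.
move=> c0 H; have := H (a / (c + 1)).
set t := a / (c + 1).
have ta : a = t * (c + 1) by rewrite /t divfK // gt_eqF // ltr_pwDr.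
rewrite mulrC -ler_pdivlMr ?invr_gt0 ?t2pos // invrK => h.
have : t ^+ 2 <= 0 by rewrite ta in h; nra.
have := sqr_ge0 t => h1 h2.
have /eqP : t ^+ 2 = 0 by apply/le_anti; rewrite h1 h2.
by rewrite sqrf_eq0 ta => /eqP ->; rewrite mul0r.
Qed.

End Rot.
Section PV.
Variables (R : realType) (d k : nat) (VA VB : 'M[R]_d) (u v : 'I_k -> 'rV[R]_d).
Hypothesis hpv : principal_vectors VA VB u v.

Lemma pv_uA i : (u i <= VA)%MS.
Proof. by have [[[? ? ?] _] _] := hpv i. Qed.
Lemma pv_vB i : (v i <= VB)%MS.
Proof. by have [[_ [? ? ?]] _] := hpv i. Qed.

Lemma ord_neq (i j : 'I_k) : (i < j)%N -> (i == j) = false.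
Proof. by move=> h; apply/eqP => E; rewrite E ltnn in h. Qed.

Lemma pv_uu i j : dotv (u i) (u j) = (i == j)%:R.
Proof.
case: (ltngtP i j) => h.
- have [[[_ _ o] _] _] := hpv j.
  by rewrite dotvC o // ord_neq.
- have [[[_ _ o] _] _] := hpv i.
  by rewrite o // eq_sym ord_neq.
- have -> : i = j by apply: val_inj.
  have [[[_ n _] _] _] := hpv j.
  by rewrite eqxx; apply/normv1P.
Qed.

Lemma pv_vv i j : dotv (v i) (v j) = (i == j)%:R.
Proof.
case: (ltngtP i j) => h.
- have [[_ [_ _ o]] _] := hpv j.
  by rewrite dotvC o // ord_neq.
- have [[_ [_ _ o]] _] := hpv i.
  by rewrite o // eq_sym ord_neq.
- have -> : i = j by apply: val_inj.
  have [[_ [_ n _]] _] := hpv j.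
  by rewrite eqxx; apply/normv1P.
Qed.

Lemma pv_c_ge0 i : 0 <= dotv (u i) (v i).
Proof.
have [[hu [hB hn ho]] mx] := hpv i.
have := mx (u i) (- v i).
rewrite dotvNr => H.
have : - dotv (u i) (v i) <= dotv (u i) (v i).
  apply: H; split => //; split.
  - by rewrite -scaleN1r scalemx_sub.
  - by apply/normv1P; rewrite dotvNl dotvNr opprK; apply/normv1P.
  - by move=> j hj; rewrite dotvNl ho // oppr0.
lra.
Qed.

Lemma pv_c_le1 i : dotv (u i) (v i) <= 1.
Proof.
have := dotvv_ge0 (u i - v i).
rewrite !dotvBl !dotvBr !pv_uu !pv_vv eqxx (dotvC (v i)).
rewrite /=; lra.
Qed.

Lemma pv_uv i j : i != j -> dotv (u i) (v j) = 0.
Proof.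
move=> nij; case: (ltngtP i j) => h; last first.
- have E : i = j by apply: val_inj.
  by rewrite E eqxx in nij.
- (* j < i : rotate u at step j *)
  apply: (@rot_alg _ (dotv (u j) (v j))); first exact: pv_c_ge0.
  move=> t; have [[hu hv] mx] := hpv j.
  rewrite -(rot_dotl t (u j) (u i) (v j)); apply: mx; split => //; split.
  - by apply: rot_sub; apply: pv_uA.
  - by apply: rot_norm; rewrite ?pv_uu ?eqxx // ord_neq.
  - move=> l hl; rewrite rot_dotl !pv_uu [j == l]eq_sym [i == l]eq_sym !ord_neq //; last exact: ltn_trans h.
    by rewrite !mulr0 ?addr0 ?mulr0.
- apply: (@rot_alg _ (dotv (u i) (v i))); first exact: pv_c_ge0.
  move=> t; have [[hu hv] mx] := hpv i.
  rewrite -(rot_dotr t (v i) (v j) (u i)); apply: mx; split => //; split.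
  - by apply: rot_sub; apply: pv_vB.
  - by apply: rot_norm; rewrite ?pv_vv ?eqxx // ord_neq.
  - move=> l hl; rewrite rot_dotl !pv_vv [j == l]eq_sym [i == l]eq_sym !ord_neq //; last exact: ltn_trans h.
    by rewrite !mulr0 ?addr0 ?mulr0.
Qed.

End PV.
Section Span.
Variables (R : realType) (d k : nat).

Lemma span_full (V : 'M[R]_d) (f : 'I_k -> 'rV[R]_d) :
  (forall i j, dotv (f i) (f j) = (i == j)%:R) -> (forall i, (f i <= V)%MS) ->
  \rank V = k -> (V <= \matrix_i f i)%MS.
Proof.
move=> ff fV rV; set F := \matrix_i f i.
have FV : (F <= V)%MS by apply/row_subP => i; rewrite rowK.
have FF : F *m F^T = 1%:M.
  apply/matrixP => i j; rewrite !mxE -ff dotvE.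
  by apply: eq_bigr => l _; rewrite !mxE.
have rF : \rank F = k.
  apply/anti_leq; rewrite rank_leq_row /=.
  by rewrite -{1}(mxrank1 R k) -FF mxrankM_maxl.
by rewrite -(mxrank_leqif_sup FV).2 rF rV.
Qed.

Lemma sum_delta (F : 'I_k -> R) j : \sum_i F i * (i == j)%:R = F j.
Proof.
rewrite (bigD1 j) //= eqxx mulr1 big1 ?addr0 // => i /negbTE ->.
by rewrite mulr0.
Qed.

Lemma sum_deltaP (P : pred 'I_k) (F : 'I_k -> R) j : P j ->
  \sum_(i | P i) F i * (i == j)%:R = F j.
Proof.
move=> Pj; rewrite (bigD1 j) //= eqxx mulr1 big1 ?addr0 // => i /andP [_ /negbTE ->].
by rewrite mulr0.
Qed.

End Span.
Section Main.
Variables (R : realType) (d k : nat) (VA VB : 'M[R]_d) (u v : 'I_k -> 'rV[R]_d).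
Variable (w : 'rV[R]_d).
Hypothesis hpv : principal_vectors VA VB u v.
Hypothesis rA : \rank VA = k.
Hypothesis rB : \rank VB = k.

Local Notation c i := (dotv (u i) (v i)).
Local Notation P := (fun i => 0 < principal_angle u v i).
Local Notation vt := (vtilde u v).

Lemma c_range i : -1 <= c i <= 1.
Proof. by rewrite (pv_c_le1 hpv) andbT (le_trans _ (pv_c_ge0 hpv i)) // lerN10. Qed.

Lemma angle_pos i : (0 < principal_angle u v i) = (c i < 1).
Proof.
rewrite /principal_angle; have := pv_c_le1 hpv i; rewrite le_eqVlt => /orP [/eqP ->|h].
  by rewrite acos1 ltxx ltxx.
by rewrite h acos_gt0 // h (le_trans _ (pv_c_ge0 hpv i)) // lerN10.
Qed.

Definition sc i := Num.sqrt (1 - c i ^+ 2).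

Lemma sc_pos i : c i < 1 -> 0 < sc i.
Proof.
move=> h; rewrite /sc sqrtr_gt0 subr_gt0.
have := pv_c_ge0 hpv i; nra.
Qed.

Lemma sc_sq i : sc i ^+ 2 = 1 - c i ^+ 2.
Proof. rewrite /sc sqr_sqrtr // subr_ge0; have := c_range i; move=> /andP [h1 h2]; nra. Qed.

Lemma vt_eq i : vt i = (sc i)^-1 *: (v i - c i *: u i).
Proof.
rewrite /vtilde /principal_angle sin_acos ?c_range //.
by rewrite (acos_def (c_range i)).2.
Qed.

Lemma uvt i j : c j < 1 -> dotv (u i) (vt j) = 0.
Proof.
move=> h; rewrite vt_eq dotvZr dotvBr dotvZr (pv_uu hpv).
case: (eqVneq i j) => [->|nij]; first by rewrite mulr1 subrr mulr0.
by rewrite (pv_uv hpv nij) mulr0 subrr mulr0.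
Qed.

Lemma vtvt i j : c i < 1 -> c j < 1 -> dotv (vt i) (vt j) = (i == j)%:R.
Proof.
move=> hi hj; rewrite !vt_eq dotvZl dotvZr dotvBl !dotvBr !dotvZl !dotvZr.
rewrite (pv_uu hpv) (pv_vv hpv) (dotvC (v i)).
case: (eqVneq i j) => [->|nij].
  have := sc_pos hj; have := sc_sq j => s2 s0.
  rewrite /= mulr1 mulrA -expr2 exprVn -s2 -expr2 subrr subr0.
  by rewrite mulVf // expf_neq0 // gt_eqF.
rewrite (pv_uv hpv nij) (pv_uv hpv (j := i)) 1?eq_sym //=.
by rewrite !mulr0 !subrr !mulr0.
Qed.

Lemma v_decomp i : c i < 1 -> v i = sc i *: vt i + c i *: u i.
Proof.
move=> h; rewrite vt_eq scalerA mulfV ?gt_eqF ?sc_pos // scale1r.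
by rewrite subrK.
Qed.

Lemma v_eq_u i : ~~ (c i < 1) -> v i = u i.
Proof.
move=> h; have c1 : c i = 1 by apply/le_anti; rewrite (pv_c_le1 hpv) leNgt h.
apply/eqP; rewrite -subr_eq0; apply/eqP/dotvv_eq0.
by rewrite !dotvBl !dotvBr (pv_uu hpv) (pv_vv hpv) (dotvC (v i) (u i)) c1 eqxx /= !subrr.
Qed.

Definition a i := dotv w (u i).
Definition b i := dotv w (vt i).
Definition pA := \sum_i a i *: u i.
Definition pAB := pA + \sum_(i | P i) b i *: vt i.

Lemma pA_orth_u j : dotv (w - pA) (u j) = 0.
Proof.
rewrite dotvBl /pA dotv_suml.
under eq_bigr do rewrite dotvZl (pv_uu hpv).
by rewrite sum_delta subrr.
Qed.

Lemma pAB_orth_u j : dotv (w - pAB) (u j) = 0.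
Proof.
rewrite /pAB opprD addrA dotvBl pA_orth_u dotv_suml big1 ?subrr // => i.
by rewrite angle_pos dotvZl (dotvC (vt i)) => h; rewrite uvt // mulr0.
Qed.

Lemma pAB_orth_vt j : P j -> dotv (w - pAB) (vt j) = 0.
Proof.
move=> Pj; have hj : c j < 1 by rewrite -angle_pos.
rewrite /pAB /pA dotvBl dotvDl !dotv_suml.
rewrite big1 ?add0r; last by move=> i _; rewrite dotvZl uvt // mulr0.
under eq_bigr => i Pi.
  rewrite dotvZl vtvt ?[c i < 1]angle_pos -?angle_pos //.
over.
by rewrite /= sum_deltaP // subrr.
Qed.

Lemma pAB_orth_v j : dotv (w - pAB) (v j) = 0.
Proof.
case: (boolP (c j < 1)) => h; last by rewrite v_eq_u // pAB_orth_u.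
rewrite (v_decomp h) dotvDr (dotvZr _ (sc j)) (dotvZr _ (c j)) pAB_orth_u.
by rewrite pAB_orth_vt ?angle_pos // !mulr0 addr0.
Qed.

Lemma pA_sub : (pA <= VA)%MS.
Proof. by apply: summx_sub => i _; rewrite scalemx_sub // (pv_uA hpv). Qed.

Lemma vt_sub i : (vt i <= VA + VB)%MS.
Proof.
rewrite vt_eq scalemx_sub // addmx_sub //.
  exact: submx_trans (pv_vB hpv i) (addsmxSr _ _).
rewrite -scaleN1r scalemx_sub // scalemx_sub //.
exact: submx_trans (pv_uA hpv i) (addsmxSl _ _).
Qed.

Lemma pAB_sub : (pAB <= VA + VB)%MS.
Proof.
rewrite addmx_sub //; first exact: submx_trans pA_sub (addsmxSl _ _).
by apply: summx_sub => i _; rewrite scalemx_sub // vt_sub.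
Qed.

Lemma pA_proj : is_orth_proj VA w pA.
Proof.
split; first exact: pA_sub.
move=> x hx; apply: (dotv_mx (E := \matrix_i u i)).
  by apply: orth_mx => i; rewrite rowK pA_orth_u.
apply: submx_trans hx _; apply: span_full => //; [exact: pv_uu | exact: pv_uA].
Qed.

Lemma pAB_proj : is_orth_proj (VA + VB)%MS w pAB.
Proof.
split; first exact: pAB_sub.
move=> x hx; apply: (dotv_mx (E := col_mx (\matrix_i u i) (\matrix_i v i))).
  rewrite tr_col_mx mul_mx_row.
  rewrite (orth_mx (E := \matrix_i u i)); last by move=> i; rewrite rowK pAB_orth_u.
  rewrite (orth_mx (E := \matrix_i v i)); last by move=> i; rewrite rowK pAB_orth_v.
  exact: row_mx0.
rewrite -addsmxE; apply: submx_trans hx _; apply: addsmxS; apply: span_full => //.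
- exact: pv_uu.
- exact: pv_uA.
- exact: pv_vv.
- exact: pv_vB.
Qed.

Lemma KA_eq : normv (orth_proj VA w) = Num.sqrt (\sum_i a i ^+ 2).
Proof.
rewrite (orth_projE pA_proj) /normv.
have -> : dotv pA pA = dotv w pA.
  by have := (pA_proj.2 _ pA_sub); rewrite dotvBl => /eqP; rewrite subr_eq0 => /eqP <-.
by rewrite /pA dotv_sumr; under eq_bigr do rewrite dotvZr -expr2.
Qed.

Lemma KAB_eq : normv (orth_proj (VA + VB)%MS w) =
   Num.sqrt (\sum_i a i ^+ 2 + \sum_(i | P i) b i ^+ 2).
Proof.
rewrite (orth_projE pAB_proj) /normv.
have -> : dotv pAB pAB = dotv w pAB.
  by have := (pAB_proj.2 _ pAB_sub); rewrite dotvBl => /eqP; rewrite subr_eq0 => /eqP <-.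
rewrite /pAB /pA dotvDr !dotv_sumr.
under eq_bigr do rewrite dotvZr -expr2.
by under [X in _ + X]eq_bigr do rewrite dotvZr -expr2.
Qed.

End Main.
Lemma final_alg (R : realType) (K e D : R) : 0 <= K -> 0 <= e ->
  D = Num.sqrt (K ^+ 2 + e ^+ 2) - K ->
  [/\ D = Num.sqrt (K ^+ 2 + e ^+ 2) - K,
      e ^+ 2 / (2 * K + e) <= D,
      D <= e,
      (K = 0 -> D = e) &
      (0 < K ->
         ((fun e : R => (Num.sqrt (K ^+ 2 + e ^+ 2) - K - e ^+ 2 / (2 * K)) / e ^+ 2)
            @ (0 : R)^' --> (0 : R)) /\
         ((fun e : R => (e ^+ 2 / (2 * K + e) - e ^+ 2 / (2 * K)) / e ^+ 2)
            @ (0 : R)^' --> (0 : R)))].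
Proof.
move=> K0 e0 ->.
set S := Num.sqrt _.
have S0 : 0 <= S by exact: sqrtr_ge0.
have SS : S ^+ 2 = K ^+ 2 + e ^+ 2 by rewrite sqr_sqrtr // addr_ge0 // sqr_ge0.
have SK : K <= S by nra.
have SKe : S <= K + e by nra.
split => //.
- have : 0 <= 2 * K + e by nra.
  rewrite le_eqVlt => /orP [/eqP <-|h].
    by rewrite invr0 mulr0 subr_ge0.
  rewrite ler_pdivrMr //; nra.
- lra.
- by move=> K00; rewrite /S K00 expr0n /= add0r sqrtr_sqr subr0 ger0_norm.
- by move=> Kp; split; [exact: lim1 | exact: lim2].
Qed.

Unset Implicit Arguments.
Theorem theorem2p6 (R : realType) (d k : nat) (VA VB : 'M[R]_d) (w : 'rV[R]_d)
    (u v : 'I_k -> 'rV[R]_d) :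
  \rank VA = k -> \rank VB = k -> normv w = 1 ->
  principal_vectors VA VB u v ->
  let KA := normv (orth_proj VA w) in
  let KB := normv (orth_proj VB w) in
  let KAB := normv (orth_proj (VA + VB)%MS w) in
  let Delta := KAB - Num.max KA KB in
  let eta := private_info u v w in
  KB <= KA ->
  [/\ Delta = Num.sqrt (KA ^+ 2 + eta ^+ 2) - KA,
      eta ^+ 2 / (2 * KA + eta) <= Delta,
      Delta <= eta,
      (KA = 0 -> Delta = eta) &
      (0 < KA ->
         ((fun e : R => (Num.sqrt (KA ^+ 2 + e ^+ 2) - KA - e ^+ 2 / (2 * KA)) / e ^+ 2)
            @ (0 : R)^' --> (0 : R)) /\
         ((fun e : R => (e ^+ 2 / (2 * KA + e) - e ^+ 2 / (2 * KA)) / e ^+ 2)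
            @ (0 : R)^' --> (0 : R)))].
Proof.
move=> rA rB nw hpv KA KB KAB Delta eta hKB.
apply: final_alg; [exact: sqrtr_ge0 | exact: sqrtr_ge0 |].
have eKA := KA_eq w hpv rA.
have eKAB := KAB_eq w hpv rA rB.
rewrite /Delta /KAB eKAB max_l // /KA eKA /eta /private_info.
by rewrite !sqr_sqrtr //; apply: sumr_ge0 => i _; rewrite sqr_ge0.
Qed.
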